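(* Let $S$ be a semigroup and $a_1,a_2,\dotsc$ a bijective (injective) sequence in $S$ that has no proper sumsequence. Let $A_\infty:=\bigcap_{n=1}^{\infty}\mathrm{FS}(a_n,a_{n+1},\dotsc)$. Then: (1) for each $s\in A_\infty$ and each $n$, there is a nonempty finite index set $F$ with $\min F\ge n$ and $s=a_F$; (2) $A_\infty$ is a (nonempty) subsemigroup of $S$; (3) every sequence $b_1,b_2,\dotsc$ of elements of $A_\infty$ is a sumsequence of $a_1,a_2,\dotsc$.
   Context: Semigroups are written additively and are not assumed commutative. For a sequence $a_1,a_2,\dotsc$ and a finite nonempty index set $F=\{i_1<\dotsb<i_m\}\subseteq\mathbb N$, let $a_F:=a_{i_1}+\dotsb+a_{i_m}$; write $F_1<F_2$ if every element of $F_1$ is smaller than every element of $F_2$. A sumsequence of $a_1,a_2,\dotsc$ is a sequence $a_{F_1},a_{F_2},\dotsc$ for some sequence $F_1<F_2<\dotsb$ of nonempty finite index sets. A sequence is proper if $a_{F_1}\ne a_{F_2}$ for all nonempty finite $F_1<F_2$. $\mathrm{FS}(a_n,a_{n+1},\dotsc)$ is the set of all $a_F$ with $F$ nonempty finite and $\min F\ge n$. *)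

(* Defs.v *)
From mathcomp Require Import all_boot.
Set Implicit Arguments. Unset Strict Implicit. Unset Printing Implicit Defensive.

(* A semigroup is given by a carrier S and an associative operation op
   (written additively in the paper, not assumed commutative).
   Sequences are indexed by nat (starting at 0 instead of 1).
   A nonempty finite index set F = {i_1 < ... < i_m} is represented by the
   strictly increasing nonempty list [:: i_1; ...; i_m]. *)

Definition idxset (F : seq nat) : bool := (F != [::]) && sorted ltn F.

(* a_F = a_{i_1} + ... + a_{i_m} (left-bracketed; bracketing is irrelevant
   by associativity).  The value on the empty list is junk and never used. *)
Definition sumF (S : Type) (op : S -> S -> S) (a : nat -> S) (F : seq nat) : S :=
  if F is i :: s then foldl (fun x j => op x (a j)) (a i) s else a 0.

Definition setlt (F1 F2 : seq nat) : bool :=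
  all (fun i => all (fun j => i < j) F2) F1.

Definition sumseq (S : Type) (op : S -> S -> S) (a b : nat -> S) : Prop :=
  exists F : nat -> seq nat,
    (forall k, idxset (F k)) /\ (forall k, setlt (F k) (F k.+1)) /\
    (forall k, b k = sumF op a (F k)).

Definition proper_seq (S : Type) (op : S -> S -> S) (a : nat -> S) : Prop :=
  forall F1 F2, idxset F1 -> idxset F2 -> setlt F1 F2 ->
    sumF op a F1 <> sumF op a F2.

Definition FS (S : Type) (op : S -> S -> S) (a : nat -> S) (n : nat) : S -> Prop :=
  fun s => exists F, [/\ idxset F, all (fun i => n <= i) F & s = sumF op a F].

Definition Ainf (S : Type) (op : S -> S -> S) (a : nat -> S) : S -> Prop :=
  fun s => forall n, FS op a n s.

(* Main.v *)
From Stdlib Require Import ClassicalEpsilon Classical.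
Require Import Defs.
From mathcomp Require Import all_boot.

Section Aux.
Variables (S : Type) (op : S -> S -> S) (op_assoc : associative op).

Lemma foldl_opA (a : nat -> S) x y t :
  foldl (fun z j => op z (a j)) (op x y) t = op x (foldl (fun z j => op z (a j)) y t).
Proof. by elim: t x y => //= j t IH x y; rewrite -op_assoc IH. Qed.

Lemma sumF_cat (a : nat -> S) F G : F != [::] -> G != [::] ->
  sumF op a (F ++ G) = op (sumF op a F) (sumF op a G).
Proof.
case: F => // i s _; case: G => // j t _ /=.
by rewrite foldl_cat /= foldl_opA.
Qed.

Lemma sumF_map (a : nat -> S) (f : nat -> nat) F : F != [::] ->
  sumF op (fun k => a (f k)) F = sumF op a (map f F).
Proof. by case: F => //= i s _; elim: s (a (f i)) => //= j s IH x; rewrite IH. Qed.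

Lemma FS_mono (a : nat -> S) n m s : n <= m -> FS op a m s -> FS op a n s.
Proof.
move=> nm [F [HF Hall ->]]; exists F; split => //.
by apply: sub_all Hall => i /= /(leq_trans nm).
Qed.

Lemma idxset_cat F G : idxset F -> idxset G -> setlt F G -> idxset (F ++ G).
Proof.
rewrite /idxset => /andP[HF sF] /andP[_ sG] lt.
apply/andP; split; first by rewrite -size_eq0 size_cat addn_eq0 size_eq0 (negbTE HF).
rewrite sorted_pairwise; last exact: ltn_trans.
by rewrite pairwise_cat -!sorted_pairwise ?sF ?sG ?andbT //; apply: ltn_trans.
Qed.

Lemma leq_sumn i s : i \in s -> i <= sumn s.
Proof.
elim: s => //= x s IH; rewrite inE => /orP[/eqP->|/IH h]; first exact: leq_addr.
by apply: leq_trans h (leq_addl _ _).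
Qed.

Lemma sub_iota n : forall F i, sorted ltn F -> all (fun x => i <= x < i + n) F ->
  subseq F (iota i n).
Proof.
elim: n => [|n IH] [|x F] i //=.
- by rewrite addn0 => _ /andP[/andP[h1 h2]]; move: (leq_ltn_trans h1 h2); rewrite ltnn.
- move=> sF /andP[/andP[h1 h2] hall].
  have allF : all (fun y => x < y) F := order_path_min ltn_trans sF.
  have hF : all (fun y => i.+1 <= y < i.+1 + n) F.
    apply/allP => y yF; rewrite addSnnS; move/allP: hall => /(_ y yF) /andP[_ ->].
    by move/allP: allF => /(_ y yF); rewrite andbT; apply: leq_ltn_trans.
  case: eqP => [e|ne].
    by apply: IH => //; exact: path_sorted sF.
  apply: IH => //=; rewrite hF andbT addSnnS h2 andbT.
  by rewrite ltn_neqAle h1 andbT; apply/eqP => e; apply: ne; rewrite e.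
Qed.

Lemma finite_avoid (a : nat -> S) (T : finType) (f : T -> S)
  (H : forall s, exists n, ~ FS op a n s) :
  exists N, forall t, ~ FS op a N (f t).
Proof.
suff [N HN] : exists N, forall t, t \in enum T -> ~ FS op a N (f t).
  by exists N => t; apply: HN; rewrite mem_enum.
elim: (enum T) => [|t l [N HN]]; first by exists 0.
have [n Hn] := H (f t); exists (maxn n N) => u; rewrite inE => /orP[/eqP->|ul] h.
  by apply: Hn; apply: FS_mono h; apply: leq_maxl.
by apply: (HN u ul); apply: FS_mono h; apply: leq_maxr.
Qed.

Lemma bounded_avoid (a : nat -> S) (H : forall s, exists n, ~ FS op a n s) m :
  exists N, m < N /\ forall F, idxset F -> all (fun i => i <= m) F ->
      ~ FS op a N (sumF op a F).
Proof.
have [N HN] := @finite_avoid a _ (fun t : (m.+1).-tuple bool =>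
                  sumF op a (mask t (iota 0 m.+1))) H.
exists (maxn N m.+1); split; first by rewrite leq_maxr.
move=> F /andP[_ sF] hall hFS.
have : subseq F (iota 0 m.+1) by apply: sub_iota => //; apply: sub_all hall => i /=.
case/subseqP => mk szm eF; rewrite size_iota in szm.
apply: (HN (@Tuple m.+1 bool mk (introT eqP szm))).
change (FS op a N (sumF op a (mask mk (iota 0 m.+1)))); rewrite -eF.
by apply: FS_mono hFS; apply: leq_maxl.
Qed.

End Aux.

Theorem lemma2p4 (S : Type) (op : S -> S -> S) (op_assoc : associative op)
    (a : nat -> S) (a_inj : injective a)
    (no_proper : forall b, sumseq op a b -> ~ proper_seq op b) :
  (forall s, Ainf op a s -> forall n, exists F : seq nat,
      [/\ idxset F, all (fun i => n <= i) F & s = sumF op a F]) /\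
  ((exists s, Ainf op a s) /\
   (forall x y, Ainf op a x -> Ainf op a y -> Ainf op a (op x y))) /\
  (forall b : nat -> S, (forall k, Ainf op a (b k)) -> sumseq op a b).
Proof.
split; first by move=> s H n; exact: H.
split; [split|].
- apply: NNPP => Hne.
  have H : forall s, exists n, ~ FS op a n s.
    move=> s; apply: NNPP => h; apply: Hne; exists s => n.
    by apply: NNPP => h'; apply: h; exists n.
  pose g m := proj1_sig (constructive_indefinite_description _
                (@bounded_avoid S op a H m)).
  have gP m : m < g m /\ forall F, idxset F -> all (fun i => i <= m) F ->
      ~ FS op a (g m) (sumF op a F).
    exact: (proj2_sig (constructive_indefinite_description _
                (@bounded_avoid S op a H m))).
  pose mk k := iter k g 0.
  have mkS k : mk k < mk k.+1 by exact: (proj1 (gP (mk k))).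
  have mk_lt : {homo mk : i j / i < j >-> i < j}.
    by apply: homo_ltn => //; apply: ltn_trans.
  apply: (no_proper (fun k => a (mk k))).
    exists (fun k => [:: mk k]); split; first by move=> k.
    by split => // k; rewrite /setlt /= mkS.
  move=> F1 F2 /andP[F1n s1] /andP[F2n s2] lt.
  rewrite (@sumF_map S op a mk F1 F1n) (@sumF_map S op a mk F2 F2n).
  case: F2 F2n s2 lt => // j F2 _ s2 lt.
  have lt1 : all (fun i => i < j) F1.
    by apply: sub_all lt => i /= /andP[].
  case: j s2 lt lt1 => [|j] s2 lt lt1.
    by case: F1 F1n lt1 s1 lt.
  move=> e; apply: (proj2 (gP (mk j)) (map mk F1)).
  + apply/andP; split; first by rewrite -size_eq0 size_map size_eq0.
    by apply: homo_sorted s1.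
  + rewrite all_map; apply/allP => i iF1 /=.
    move/allP: lt1 => /(_ i iF1); rewrite ltnS leq_eqVlt => /orP[/eqP->//|h].
    exact: ltnW (mk_lt _ _ h).
  + rewrite e; exists (map mk (j.+1 :: F2)); split => //.
    * by apply/andP; split => //; apply: homo_sorted s2.
    * rewrite /= leqnn /=; rewrite all_map.
      have := order_path_min ltn_trans s2.
      move=> /allP hj; apply/allP => i iF2 /=.
      exact: ltnW (mk_lt _ _ (hj i iF2)).
- move=> x y Hx Hy n.
  have [F [HF HFn ->]] := Hx n.
  have [G [HG HGn ->]] := Hy (n + sumn F).+1.
  have lt : setlt F G.
    apply/allP => i iF; apply/allP => j jG /=.
    move/allP: HGn => /(_ j jG) h; apply: leq_trans h.
    by rewrite ltnS; apply: leq_trans (@leq_sumn _ _ iF) (leq_addl _ _).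
  exists (F ++ G); split.
  + exact: idxset_cat.
  + rewrite all_cat HFn /=; apply: sub_all HGn => j /= h.
    by apply: leq_trans h; rewrite ltnW // ltnS leq_addr.
  + by rewrite sumF_cat //; [case/andP: HF | case/andP: HG].
- move=> b Hb.
  pose pick n k := proj1_sig (constructive_indefinite_description _ (Hb k n)).
  have pickP n k : [/\ idxset (pick n k), all (fun i => n <= i) (pick n k)
                     & b k = sumF op a (pick n k)].
    exact: (proj2_sig (constructive_indefinite_description _ (Hb k n))).
  pose F := fix F k := if k is k'.+1 then pick (sumn (F k')).+1 k else pick 0 0.
  exists F; split; [|split].
  + by case=> [|k]; [have [] := pickP 0 0 | have [] := pickP (sumn (F k)).+1 k.+1].
  + move=> k; apply/allP => i iF; apply/allP => j jF /=.
    have [_ h _] := pickP (sumn (F k)).+1 k.+1.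
    move/allP: h => /(_ j jF) h'; apply: leq_trans h'.
    by rewrite ltnS leq_sumn.
  + by case=> [|k]; [have [] := pickP 0 0 | have [] := pickP (sumn (F k)).+1 k.+1].
Qed.
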